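(* Let $p$ be a prime and let $c_1,c_2,\lambda\in\mathbf{Q}_p$ with $c_2\neq 0$ and $\lambda\neq 0$. Let $(a_n)_{n\ge 0}$ be the sequence $a_n=(c_1+c_2 n)\lambda^n$, and let $K$ be its Kepler set. Then $$K=\begin{cases}\lambda\left(1+\dfrac{c_2}{c_1}+\left(\dfrac{c_2}{c_1}\right)^2\mathbf{Z}_p\right), & |c_1|_p>|c_2|_p,\\[2mm] \mathbf{Q}_p\setminus \lambda\left(1+p\mathbf{Z}_p\right), & |c_1|_p\le |c_2|_p.\end{cases}$$
   Context: The Kepler set of a sequence $(a_n)_{n\ge0}$ in $\mathbf{Q}_p$ is the closure in $\mathbf{Q}_p$ of the set of consecutive ratios $\{a_{n+1}/a_n : n\ge 0,\ a_n\neq 0\}$. For $x\in\mathbf{Q}_p$ and a set $A\subseteq\mathbf{Q}_p$, $xA=\{xa:a\in A\}$ and $x+A=\{x+a:a\in A\}$. *)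

(* Defs.v *)
(* Such (F, v) is unique up
   to isometric isomorphism, i.e. it IS Q_p. *)
From mathcomp Require Import all_boot all_order all_algebra.
From mathcomp Require Import reals.
Set Implicit Arguments. Unset Strict Implicit. Unset Printing Implicit Defensive.
Import Order.TTheory GRing.Theory Num.Theory.
Local Open Scope ring_scope.

Definition padic_abs (R : realType) (p : nat) (q : rat) : R :=
  if q == 0 then 0
  else (p%:R ^+ logn p `|denq q|%N) / (p%:R ^+ logn p `|numq q|%N).

Record is_Qp (p : nat) (R : realType) (F : fieldType) (v : F -> R) : Prop := {
  Qp_ge0 : forall x, 0 <= v x;
  Qp_eq0 : forall x, v x = 0 -> x = 0;
  Qp_mul : forall x y, v (x * y) = v x * v y;
  Qp_ultra : forall x y, v (x + y) <= Num.max (v x) (v y);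
  Qp_rat : forall q : rat, v (ratr q) = padic_abs R p q;
  Qp_dense : forall x e, 0 < e -> exists q : rat, v (x - ratr q) < e;
  Qp_complete : forall u : nat -> F,
    (forall e, 0 < e -> exists N, forall m n, (N <= m)%N -> (N <= n)%N ->
        v (u m - u n) < e) ->
    exists l, forall e, 0 < e -> exists N, forall n, (N <= n)%N -> v (u n - l) < e
}.

(* Kepler set: closure (for the metric d(x,y) = v (x - y)) of the set of
   consecutive ratios a (n+1) / a n with a n <> 0 *)
Definition kepler_set (R : realType) (F : fieldType) (v : F -> R)
  (a : nat -> F) (x : F) : Prop :=
  forall e, 0 < e -> exists n, a n != 0 /\ v (x - a n.+1 / a n) < e.

Definition in_Zp (R : realType) (F : fieldType) (v : F -> R) (z : F) : Prop :=
  v z <= 1.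

(* Main.v *)
Require Import Defs.
From mathcomp Require Import all_boot all_order all_algebra.
From mathcomp Require Import reals.
From mathcomp Require Import ring lra.
Import Order.TTheory GRing.Theory Num.Theory.
Local Open Scope ring_scope.

Section Basic.
Variables (p : nat) (R : realType) (F : fieldType) (v : F -> R).
Hypotheses (hp : prime p) (hF : is_Qp p v).

Lemma v0 : v 0 = 0.
Proof. by have := Qp_rat hF (0%:~R); rewrite ratr_int /padic_abs eqxx. Qed.

Lemma vge0 x : 0 <= v x. Proof. by case: hF. Qed.

Lemma vM x y : v (x * y) = v x * v y. Proof. by case: hF. Qed.

Lemma v1 : v 1 = 1.
Proof.
have := Qp_rat hF (1%:~R); rewrite ratr_int /padic_abs oner_eq0.
have -> : denq 1 = 1 by [].
have -> : numq 1 = 1 by [].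
by rewrite /= logn1 expr0 divr1.
Qed.

Lemma vN1 : v (-1) = 1.
Proof.
have h : v (-1) * v (-1) = 1 by rewrite -vM mulrNN mulr1 v1.
have := vge0 (-1); nra.
Qed.

Lemma vN x : v (- x) = v x.
Proof. by rewrite -mulN1r vM vN1 mul1r. Qed.

Lemma vB x y : v (x - y) = v (y - x).
Proof. by rewrite -vN opprB. Qed.

Lemma vD x y : v (x + y) <= Num.max (v x) (v y). Proof. by case: hF. Qed.

Lemma vD_le x y e : v x <= e -> v y <= e -> v (x + y) <= e.
Proof. move=> hx hy; apply: le_trans (vD x y) _; by rewrite ge_max hx hy. Qed.

Lemma vD_lt x y e : v x < e -> v y < e -> v (x + y) < e.
Proof. move=> hx hy; apply: le_lt_trans (vD x y) _; by rewrite gt_max hx hy. Qed.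

Lemma v_eq0 x : (v x == 0) = (x == 0).
Proof.
apply/eqP/eqP => [/(Qp_eq0 hF)//|->]; exact: v0.
Qed.

Lemma v_gt0 x : x != 0 -> 0 < v x.
Proof. by move=> hx; rewrite lt_def v_eq0 hx vge0. Qed.

Lemma vV x : v (x^-1) = (v x)^-1.
Proof.
have [->|hx] := eqVneq x 0; first by rewrite invr0 v0 invr0.
have h : v x * v x^-1 = 1 by rewrite -vM mulfV // v1.
have hx0 : v x != 0 by rewrite v_eq0.
by rewrite -[LHS]mul1r -(mulVf hx0) -mulrA h mulr1.
Qed.

Lemma vdiv x y : v (x / y) = v x / v y.
Proof. by rewrite vM vV. Qed.

Lemma vD_strict x y : v x < v y -> v (x + y) = v y.
Proof.
move=> hxy; apply/eqP; rewrite eq_le; apply/andP; split.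
  by apply: vD_le => //; exact: ltW.
have : v y <= Num.max (v (x + y)) (v (- x)).
  by have := vD (x + y) (- x); rewrite addrC addKr.
rewrite vN le_max => /orP[//|]; by rewrite leNgt hxy.
Qed.

Lemma vnat n : v n%:R <= 1.
Proof.
elim: n => [|n ih]; first by rewrite v0.
by rewrite mulrS; apply: vD_le => //; rewrite v1.
Qed.


Lemma pgt1 : 1 < (p%:R : R).
Proof. by rewrite ltr1n prime_gt1. Qed.

Lemma pgt0 : 0 < (p%:R : R).
Proof. by rewrite ltr0n prime_gt0. Qed.

Lemma pexp_gt0 k : 0 < (p%:R : R) ^+ k.
Proof. by rewrite exprn_gt0 // pgt0. Qed.

Lemma padic_int (m : int) : m != 0 ->
  padic_abs R p (m%:~R) = ((p%:R ^+ logn p `|m|) ^-1).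
Proof.
move=> hm; rewrite /padic_abs intq_eq0 (negbTE hm) denq_int numq_int /=.
by rewrite logn1 expr0 div1r.
Qed.

Lemma v_int m : v (m%:~R) = padic_abs R p m%:~R.
Proof. by have := Qp_rat hF (m%:~R); rewrite ratr_int. Qed.

Lemma v_int_le m k : (p ^ k %| `|m|)%N -> v m%:~R <= (p%:R ^+ k)^-1.
Proof.
have [->|hm] := eqVneq m 0.
  by move=> _; rewrite v0 invr_ge0 ltW // pexp_gt0.
move=> hd; rewrite v_int padic_int //.
rewrite lef_pV2 ?posrE ?pexp_gt0 // ler_eXn2l ?pgt1 //.
by rewrite -pfactor_dvdn // absz_gt0.
Qed.

Lemma v_int_unit m : ~~ (p %| `|m|)%N -> v m%:~R = 1.
Proof.
move=> hd; have hm : m != 0 by apply: contraNneq hd => ->; rewrite dvdn0.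
rewrite v_int padic_int // logn_coprime ?expr0 ?invr1 //.
by rewrite prime_coprime.
Qed.

Lemma v_p : v p%:R = (p%:R)^-1.
Proof.
have e : (p%:R : F) = (p%:Z)%:~R by rewrite -pmulrn.
rewrite e v_int padic_int ?absz_nat.
  by rewrite (_ : logn p p = 1)%N ?expr1 // -{2}(expn1 p) pfactorK.
by rewrite eqz_nat -lt0n prime_gt0.
Qed.


Lemma padic_rat q : q != 0 -> padic_abs R p q =
  (p%:R ^+ logn p `|denq q|) / (p%:R ^+ logn p `|numq q|).
Proof. by move=> hq; rewrite /padic_abs (negbTE hq). Qed.

Lemma disc y : v y < 1 -> v y <= (p%:R)^-1.
Proof.
move=> hy1.
have [->|hy] := eqVneq y 0; first by rewrite v0 invr_ge0 ltW // pgt0.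
have [q hq] := Qp_dense hF y (v_gt0 y hy).
have e : v (ratr q) = v y.
  have -> : ratr q = - (y - ratr q) + y by rewrite opprB subrK.
  by apply: vD_strict; rewrite vN.
have hq0 : q != 0.
  apply: contraTneq hy => hq0; move: e; rewrite hq0.
  rewrite (_ : 0 = 0%:~R) // ratr_int => e.
  by rewrite negbK -v_eq0 -e v0.
move: hy1; rewrite -e (Qp_rat hF) padic_rat //.
set a := logn p _; set b := logn p _ => h.
have hab : (a < b)%N.
  rewrite -(ltr_eXn2l pgt1); move: h.
  by rewrite ltr_pdivrMr ?pexp_gt0 // mul1r.
rewrite ler_pdivrMr ?pexp_gt0 // mulrC ler_pdivlMr ?pgt0 //.
rewrite -exprSr.
by rewrite ler_eXn2l ?pgt1.
Qed.


Lemma dens u e : v u <= 1 -> 0 < e -> exists n : nat, v (u - n%:R) < e.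
Proof.
move=> hu he.
set K := Num.Def.archi_bound (e^-1).
set P := (p%:R : R) ^+ K.
have hP0 : 0 < P by apply: pexp_gt0.
have hPe : P^-1 < e.
  rewrite -[e]invrK ltf_pV2 ?posrE ?invr_gt0 //.
  apply: lt_le_trans (archi_boundP (ltW (ltac:(by rewrite invr_gt0) : 0 < e^-1))) _.
  by rewrite /P -natrX ler_nat ltnW // ltn_expl // prime_gt1.
have [q hq] := Qp_dense hF u (ltac:(by rewrite invr_gt0) : 0 < P^-1).
have hP1 : P^-1 <= 1 by rewrite invf_le1 // exprn_ege1 // ltW // pgt1.
have hq1 : v (ratr q) <= 1.
  have -> : ratr q = u - (u - ratr q) by rewrite opprB addrC subrK.
  by apply: vD_le => //; rewrite vN (le_trans (ltW hq)).
have hD : ~~ (p %| `|denq q|)%N.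
  apply/negP => hpD.
  have hq0 : q != 0.
    by apply: contraTneq hpD => ->; rewrite /= dvdn1 gtn_eqF // prime_gt1.
  have hN : ~~ (p %| `|numq q|)%N.
    apply/negP => hpN; have := coprime_num_den q; rewrite /coprime => /eqP h1.
    have := dvdn_gcd p `|numq q| `|denq q|; rewrite hpN hpD h1 dvdn1.
    by rewrite gtn_eqF // prime_gt1.
  move: hq1; rewrite (Qp_rat hF) padic_rat // (logn_coprime (m:=`|numq q|%N)).
    rewrite expr0 divr1 leNgt exprn_egt1 ?pgt1 // -lt0n.
    rewrite -pfactor_dvdn ?expn1 //.
    - by rewrite hpD.
    - by rewrite absz_gt0 denq_neq0.
  by rewrite prime_coprime.
set N := numq q; set D := denq q.
set pk : int := (p ^ K)%N.
have hpk : pk != 0 by rewrite /pk eqz_nat -lt0n expn_gt0 prime_gt0.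
have hcop : coprimez D pk.
  rewrite coprimezE absz_nat coprime_sym coprimeXl //.
  by rewrite prime_coprime.
have [[u1 u2] /= huv] := coprimezP _ _ hcop.
set m := ((N * u1) %% pk)%Z.
have hm0 : 0 <= m by apply: modz_ge0.
exists `|m|%N.
have hmF : (`|m|%N%:R : F) = m%:~R by rewrite pmulrn gez0_abs.
have hM : (p ^ K %| `|(N - m * D)%R|)%N.
  have E := divz_eq (N * u1) pk.
  set Q := (_ %/ _)%Z in E.
  have -> : N - m * D = pk * (N * u2 + Q * D).
    have hm : m = N * u1 - Q * pk by rewrite E; ring.
    rewrite hm -{1}[N]mulr1 -huv; ring.
  by rewrite abszM absz_nat dvdn_mulr.
have hD1 : v D%:~R = 1 by apply: v_int_unit.
have hDF : (D%:~R : F) != 0 by rewrite -v_eq0 hD1 oner_eq0.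
have -> : u - `|m|%N%:R = (u - ratr q) + (N - m * D)%:~R / D%:~R.
  rewrite hmF /ratr -/N -/D intrB intrM; field => //.
apply: le_lt_trans hPe; apply: vD_le; first exact: ltW.
by rewrite vdiv hD1 divr1 v_int_le.
Qed.

Lemma kep_iff c1 c2 lam x : lam != 0 ->
  kepler_set v (fun n : nat => (c1 + c2 * n%:R) * lam ^+ n) x <->
  (forall e, 0 < e -> exists n : nat, c1 + c2 * n%:R != 0 /\
     v (x / lam - 1 - c2 / (c1 + c2 * n%:R)) < e).
Proof.
move=> hl.
have hlv : 0 < v lam by apply: v_gt0.
set a := fun n : nat => _.
have ha n : (a n != 0) = (c1 + c2 * n%:R != 0).
  by rewrite /a mulf_eq0 negb_or expf_neq0 // andbT.
have hr n : c1 + c2 * n%:R != 0 ->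
    x - a n.+1 / a n = lam * (x / lam - 1 - c2 / (c1 + c2 * n%:R)).
  move=> hd; rewrite /a exprS mulrS.
  have hln : lam ^+ n != 0 by rewrite expf_neq0.
  by field; rewrite hd hln hl.
split.
- move=> hk e he.
  have [n [hn hv]] := hk (e * v lam) (mulr_gt0 he hlv).
  exists n; rewrite -ha; split => //.
  by move: hv; rewrite hr -?ha // vM mulrC ltr_pM2r.
- move=> hk e he.
  have [n [hn hv]] := hk (e / v lam) (divr_gt0 he hlv).
  exists n; rewrite ha hr // vM; split => //.
  by rewrite mulrC -ltr_pdivlMr.
Qed.

Lemma case1 c1 c2 lam (hc2 : c2 != 0) (hlam : lam != 0) :
  v c2 < v c1 ->
  forall x, (forall e, 0 < e -> exists n : nat, c1 + c2 * n%:R != 0 /\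
     v (x / lam - 1 - c2 / (c1 + c2 * n%:R)) < e) <->
   exists z, in_Zp v z /\ x = lam * (1 + c2 / c1 + (c2 / c1) ^+ 2 * z).
Proof.
move=> h12 x.
have hc1 : c1 != 0.
  by rewrite -v_eq0 gt_eqF // (le_lt_trans (vge0 _) h12).
have hc1v : 0 < v c1 by apply: v_gt0.
have [s hs] : exists s, c2 = s * c1 by exists (c2 / c1); rewrite divfK.
have hs0 : s != 0 by apply: contraNneq hc2 => hs0; rewrite hs hs0 mul0r.
have hs1 : v s < 1.
  by move: h12; rewrite hs vM -ltr_pdivlMr // divff ?gt_eqF.
have hsn (m : F) : v m <= 1 -> v (1 + s * m) = 1.
  move=> hm; rewrite addrC vD_strict v1 // vM.
  by apply: le_lt_trans hs1; rewrite -[X in _ <= X]mulr1 ler_wpM2l ?vge0.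
have hd n : c1 + c2 * n%:R = c1 * (1 + s * n%:R) by rewrite hs; ring.
have hd0 n : 1 + s * n%:R != 0 by rewrite -v_eq0 hsn ?vnat ?oner_eq0.
have hdd n : c1 + c2 * n%:R != 0 by rewrite hd mulf_neq0.
have hcs : c2 / c1 = s by rewrite hs mulfK.
rewrite hcs.
split.
- move=> hk; exists ((x / lam - 1 - s) / s ^+ 2); split; last first.
    by field; rewrite hs0 hlam.
  rewrite /in_Zp vdiv ler_pdivrMr ?v_gt0 ?expf_neq0 // mul1r.
  rewrite leNgt; apply/negP => hlt.
  have [n [_ hn]] := hk _ (le_lt_trans (vge0 _) hlt).
  have h2 : v (c2 / (c1 + c2 * n%:R) - s) < v (x / lam - 1 - s).
    have -> : c2 / (c1 + c2 * n%:R) - s = - (s ^+ 2 * n%:R) / (1 + s * n%:R).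
      by rewrite hd hs; field; rewrite hc1 hd0.
    rewrite vdiv vN hsn ?vnat // divr1 vM; apply: le_lt_trans hlt.
    by rewrite -[X in _ <= X]mulr1 ler_wpM2l ?vge0 ?vnat.
  have e1 : x / lam - 1 - s =
      (x / lam - 1 - c2 / (c1 + c2 * n%:R)) + (c2 / (c1 + c2 * n%:R) - s)
      by ring.
  by have := vD_lt _ _ _ hn h2; rewrite -e1 ltxx.
- move=> [z [hz ->]] e he.
  have hsz := hsn z hz.
  have hsz0 : 1 + s * z != 0 by rewrite -v_eq0 hsz oner_eq0.
  set w := - z / (1 + s * z).
  have hw : v w <= 1 by rewrite /w vdiv vN hsz divr1.
  have [n hn] := dens _ _ hw he.
  exists n; split; first exact: hdd.
  have -> : lam * (1 + s + s ^+ 2 * z) / lam - 1 - c2 / (c1 + c2 * n%:R) =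
      s ^+ 2 * (n%:R - w) * ((1 + s * z) / (1 + s * n%:R)).
    by rewrite /w hd hs; field; rewrite hlam hc1 hd0 hsz0.
  rewrite vM vdiv hsz hsn ?vnat // divr1 mulr1 vM vB.
  apply: le_lt_trans hn.
  rewrite -[X in _ <= X]mul1r ler_wpM2r ?vge0 //.
  rewrite expr2 vM -[X in _ <= X]mulr1 ler_pM ?vge0 //; exact: ltW.
Qed.

Lemma case2 c1 c2 lam (hc2 : c2 != 0) (hlam : lam != 0) :
  v c1 <= v c2 ->
  forall x, (forall e, 0 < e -> exists n : nat, c1 + c2 * n%:R != 0 /\
     v (x / lam - 1 - c2 / (c1 + c2 * n%:R)) < e) <->
   ~ (exists z, in_Zp v z /\ x = lam * (1 + p%:R * z)).
Proof.
move=> h21 x.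
have hc2v : 0 < v c2 by apply: v_gt0.
have [t ht0] : exists t, c1 = t * c2 by exists (c1 / c2); rewrite divfK.
subst c1.
have ht : v t <= 1 by move: h21; rewrite vM -ler_pdivlMr // divff ?gt_eqF.
have hPv : v (p%:R : F) = (p%:R)^-1 := v_p.
have hP0 : (p%:R : F) != 0 by rewrite -v_eq0 hPv invr_eq0 gt_eqF ?pgt0.
have hPi1 : (p%:R : R)^-1 < 1 by rewrite invf_lt1 ?pgt0 ?pgt1.
have hd n : t * c2 + c2 * n%:R = c2 * (t + n%:R) by ring.
set y := x / lam - 1.
split.
- move=> hk [z [hz hx]].
  have [n [hn h1]] := hk 1 ltr01.
  have hy : y = p%:R * z by rewrite /y hx; field.
  have hyv : v y < 1.
    rewrite hy vM hPv; apply: le_lt_trans hPi1.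
    by rewrite -[X in _ <= X]mulr1 ler_wpM2l ?invr_ge0 ?ler0n.
  have htn0 : t + n%:R != 0 by move: hn; rewrite hd mulf_eq0 negb_or => /andP[].
  have hw : 1 <= v (c2 / (t * c2 + c2 * n%:R)).
    rewrite hd invfM mulrA mulfV // mul1r vV invf_ge1 ?v_gt0 //.
    by apply: vD_le => //; apply: vnat.
  have e1 : c2 / (t * c2 + c2 * n%:R) = y - (y - c2 / (t * c2 + c2 * n%:R)) by ring.
  have := vD_lt _ _ _ hyv (ltac:(by rewrite vN) : v (- (y - c2 / (t * c2 + c2 * n%:R))) < 1).
  by rewrite -e1 ltNge hw.
- move=> hno e he.
  have hy : 1 <= v y.
    rewrite leNgt; apply/negP => hlt; apply: hno.
    exists (y / p%:R); split.
      rewrite /in_Zp vdiv hPv ler_pdivrMr ?invr_gt0 ?pgt0 // mul1r.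
      exact: disc.
    by rewrite /y; field; rewrite hlam hP0.
  have hy0 : y != 0 by rewrite -v_eq0 gt_eqF // (lt_le_trans ltr01).
  set w := y^-1.
  have hwv : v w = (v y)^-1 by rewrite vV.
  have hw0 : 0 < v w by rewrite hwv invr_gt0 (lt_le_trans ltr01).
  have hw1 : v (w - t) <= 1.
    apply: vD_le; last by rewrite vN.
    by rewrite hwv invf_le1 // (lt_le_trans ltr01).
  have hmin : 0 < Num.min (v w) (e * v w ^+ 2).
    by rewrite lt_min hw0 mulr_gt0 // exprn_gt0.
  have [n] := dens _ _ hw1 hmin.
  rewrite lt_min => /andP[hn1 hn2].
  have e1 : v (t + n%:R - w) = v (w - t - n%:R) by rewrite -vN; congr v; ring.
  have hr : v (t + n%:R) = v w.
    have -> : t + n%:R = (t + n%:R - w) + w by rewrite subrK.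
    by apply: vD_strict; rewrite e1.
  have hr0 : t + n%:R != 0 by rewrite -v_eq0 hr gt_eqF.
  exists n; split; first by rewrite hd mulf_neq0.
  have -> : y - c2 / (t * c2 + c2 * n%:R) = (t + n%:R - w) * (y / (t + n%:R)).
    by rewrite /w hd; field; rewrite hy0 hr0 hc2.
  rewrite vM vdiv hr e1.
  have hyp : 0 < v y by apply: lt_le_trans hy.
  rewrite hwv invrK -ltr_pdivlMr ?mulr_gt0 //.
  by move: hn2; rewrite hwv exprVn expr2.
Qed.
End Basic.

Theorem theorem1 (p : nat) (R : realType) (F : fieldType) (v : F -> R)
  (hp : prime p) (hF : is_Qp p v) (c1 c2 lam : F)
  (hc2 : c2 != 0) (hlam : lam != 0) :
  let a := fun n : nat => (c1 + c2 * n%:R) * lam ^+ n in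
  (v c2 < v c1 ->
     forall x, kepler_set v a x <->
       exists z, in_Zp v z /\ x = lam * (1 + c2 / c1 + (c2 / c1) ^+ 2 * z)) /\
  (v c1 <= v c2 ->
     forall x, kepler_set v a x <->
       ~ (exists z, in_Zp v z /\ x = lam * (1 + p%:R * z))).
Proof.
move=> a; split.
- move=> h x; apply: iff_trans (@kep_iff p R F v hF c1 c2 lam x hlam) _.
  exact: (@case1 p R F v hp hF c1 c2 lam hc2 hlam h x).
- move=> h x; apply: iff_trans (@kep_iff p R F v hF c1 c2 lam x hlam) _.
  exact: (@case2 p R F v hp hF c1 c2 lam hc2 hlam h x).
Qed.
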